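(* Let $G\subseteq W(\mathsf D_n)$ be a group satisfying the (H1), relative minimality and minimality conditions, let $O$ be an orbit of $pr(G)$ on $\{1,\dots,n\}$ of size $n'$, with indices labelled so that $O=\{1,\dots,n'\}$. For $g\in G$ let $g_O$ denote the product of those signed permutation cycles of $g$ whose underlying cycles lie in $O$, and define $P_O(g)=g_Oc_{n'+1}$ if $\sigma(g_O)=-1$ and $P_O(g)=g_O$ if $\sigma(g_O)=1$. Then $\overline G_O=\{P_O(g): g\in G\}$ is a group and $P_O:G\to\overline G_O$ is a group homomorphism.
   Context: $W(\mathsf B_m)$ is the group of signed permutations of the symbols $j^\pm$ ($1\le j\le m$), generated by $\mathfrak S_m$ and involutions $c_j$ exchanging $j^\pm$; elements are $c_{j_1}\cdots c_{j_t}\tau$; $pr(c_{j_1}\cdots c_{j_t}\tau)=\tau$; $\sigma(c_{j_1}\cdots c_{j_t}\tau)=(-1)^t$; $W(\mathsf D_m)=\ker\sigma$. Signed permutation cycles of $g$: for each cycle $\gamma$ of $\tau$ (fixed points included), $\beta_\gamma=(\prod_{j_i\in\mathrm{supp}\,\gamma}c_{j_i})\gamma$. $W(\mathsf D_n)$ acts on $\mathrm{Pic}(\bar X)=\bigoplus_{i=-1}^n\mathbb Zl_i$ by: for $g=c_{j_1}\cdots c_{j_t}\tau$ with $s(i)=-1$ iff $i\in\{j_1,\dots,j_t\}$, $\Phi(g)l_0=l_0$, $\Phi(g)l_{-1}=l_{-1}+\frac t2l_0-\sum_{s(i)=-1}l_i$, $\Phi(g)l_v=l_u$ or $l_0-l_u$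 ($u=\tau^{-1}(v)$) according as $s(u)=1$ or $-1$. (H1): $\mathrm H^1(H,\mathrm{Pic}(\bar X))=0$ for all subgroups $H\subseteq G$. Relative minimality: $\mathrm{Pic}(\bar X)^G=\mathbb Zl_0\oplus\mathbb ZK$ with $K=-2(l_{-1}+l_0)+\sum_{i=1}^nl_i$. Minimality: $G$ corresponds to a $k$-minimal conic bundle; in particular, for each $j$, $j^+$ and $j^-$ lie in the same $G$-orbit. $\overline G_O$ is regarded inside $W(\mathsf D_{n'+1})$ (or $W(\mathsf D_{n'})$ if no $c_{n'+1}$ occurs). *)

(* Defs.v *)
From HB Require Import structures.
From mathcomp Require Import all_boot all_order all_fingroup all_algebra.
Set Implicit Arguments. Unset Strict Implicit. Unset Printing Implicit Defensive.
Import GRing.Theory.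
Local Open Scope ring_scope.

(* Symbols j^+ / j^- (1 <= j <= m) are encoded as (j, true) / (j, false),
   with j : 'I_m (0-based). Products are mathcomp's:
   (g * h) x = h (g x). *)
Section Defs.

Definition flipS m (x : 'I_m * bool) : 'I_m * bool := (x.1, ~~ x.2).

Definition WB m : {set {perm ('I_m * bool)}} :=
  [set g : {perm ('I_m * bool)} | [forall x, g (flipS x) == flipS (g x)]].

Definition cS m (j : 'I_m) : {perm ('I_m * bool)} := tperm (j, true) (j, false).

(* Writing g = c_{j_1} ... c_{j_t} tau (mathcomp product), the indices j_i are
   exactly the u with g(u^+) = (tau u)^- : s(u) = -1 iff srcneg g u. *)
Definition srcneg m (g : {perm ('I_m * bool)}) (u : 'I_m) : bool := ~~ (g (u, true)).2.

Definition tcount m (g : {perm ('I_m * bool)}) : nat := #|[set u | srcneg g u]|.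

Definition sgnneg m (g : {perm ('I_m * bool)}) : bool := odd (tcount g).

Definition WD m : {set {perm ('I_m * bool)}} := [set g in WB m | ~~ sgnneg g].

Definition prf m (g : {perm ('I_m * bool)}) (i : 'I_m) : 'I_m := (g (i, true)).1.

Definition prinv m (g : {perm ('I_m * bool)}) (v : 'I_m) : 'I_m := ((g^-1)%g (v, true)).1.

(* ---------- Pic(X-bar) = (+)_{i=-1}^n Z l_i, indexed by 'I_n.+2:
   index 0 <-> l_{-1}, index 1 <-> l_0, index i.+2 <-> l_{i+1} (i : 'I_n). *)
Definition Pic n := {ffun 'I_n.+2 -> int}.
Definition im1 n : 'I_n.+2 := ord0.
Definition i0 n : 'I_n.+2 := lift ord0 ord0.
Definition il n (i : 'I_n) : 'I_n.+2 := lift ord0 (lift ord0 i).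
Definition ebas n (k : 'I_n.+2) : Pic n := [ffun j => ((j == k) : nat)%:Z].

Definition Phi_m1 n (g : {perm ('I_n * bool)}) : Pic n :=
  ebas (im1 n) + ebas (i0 n) *~ ((tcount g)./2)%:Z
  - \sum_(i : 'I_n | srcneg g i) ebas (il i).

Definition Phi_l n (g : {perm ('I_n * bool)}) (v : 'I_n) : Pic n :=
  let u := prinv g v in
  if srcneg g u then ebas (i0 n) - ebas (il u) else ebas (il u).

Definition Phi n (g : {perm ('I_n * bool)}) (x : Pic n) : Pic n :=
  Phi_m1 g *~ x (im1 n) + ebas (i0 n) *~ x (i0 n)
  + \sum_(v : 'I_n) Phi_l g v *~ x (il v).

Definition Kcan n : Pic n :=
  (ebas (im1 n) + ebas (i0 n)) *~ (-2) + \sum_(i : 'I_n) ebas (il i).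

(* (H1): H^1(H, Pic) = 0 for all subgroups H of G: every crossed homomorphism
   is principal. *)
Definition H1_cond n (G : {group {perm ('I_n * bool)}}) : Prop :=
  forall H : {group {perm ('I_n * bool)}}, H \subset G ->
  forall f : {perm ('I_n * bool)} -> Pic n,
    {in H &, forall g h, f (g * h)%g = f g + Phi g (f h)} ->
    exists v : Pic n, {in H, forall g, f g = Phi g v - v}.

Definition relmin_cond n (G : {group {perm ('I_n * bool)}}) : Prop :=
  forall x : Pic n, ({in G, forall g, Phi g x = x} <->
    exists a b : int, x = ebas (i0 n) *~ a + Kcan n *~ b).

(* minimality (group-theoretic consequence used in the paper):
   j^+ and j^- lie in the same G-orbit. *)
Definition min_cond n (G : {group {perm ('I_n * bool)}}) : Prop :=
  forall j : 'I_n, exists2 g, g \in G & g (j, true) = (j, false).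

(* ---------- The map P_O, for O = {0,...,n'-1} (paper: {1,...,n'}).
   The target is W(B_{n'+1}); the extra index ord_max (value n') is the
   paper's n'+1. *)
Definition perm_or1 (T : finType) (f : T -> T) : {perm T} :=
  match injectiveP f with
  | ReflectT inj => perm inj
  | ReflectF _ => 1%g
  end.

Definition gO_fun n n' (g : {perm ('I_n * bool)}) (x : 'I_n'.+1 * bool)
  : 'I_n'.+1 * bool :=
  if (nat_of_ord x.1 < n')%N then
    match (insub (nat_of_ord x.1) : option 'I_n) with
    | Some i => let y := g (i, x.2) in (inord (nat_of_ord y.1), y.2)
    | None => x
    end
  else x.

Definition gO n n' (g : {perm ('I_n * bool)}) : {perm ('I_n'.+1 * bool)} :=
  perm_or1 (@gO_fun n n' g).

Definition PO n n' (g : {perm ('I_n * bool)}) : {perm ('I_n'.+1 * bool)} :=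
  if sgnneg (@gO n n' g) then (cS (@ord_max n') * @gO n n' g)%g else @gO n n' g.

End Defs.
Arguments gO_fun {n} n' g x.
Arguments gO {n} n' g.
Arguments PO {n} n' g.

(* Main.v *)
Require Import Defs.
From HB Require Import structures.
From mathcomp Require Import all_boot all_order all_fingroup all_algebra.

Lemma sgnneg_xor m (g : {perm ('I_m * bool)}) :
  sgnneg g = \big[addb/false]_(u : 'I_m) srcneg g u.
Proof.
rewrite /sgnneg.
have -> : tcount g = \sum_(u : 'I_m) (srcneg g u : nat).
  rewrite /tcount -sum1dep_card big_mkcond /=; apply eq_bigr => u _.
  by case: (srcneg g u).
rewrite (big_morph odd oddD (erefl (odd 0))).
by apply: eq_bigr => u _; case: (srcneg g u).
Qed.

Lemma WB_flip m (g : {perm ('I_m * bool)}) x :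
  g \in WB m -> g (flipS x) = flipS (g x).
Proof. by rewrite inE => /forallP /(_ x) /eqP. Qed.

Lemma WB_fst m (g : {perm ('I_m * bool)}) i b :
  g \in WB m -> (g (i, b)).1 = (g (i, true)).1.
Proof.
move=> Hg; case: b => //.
by rewrite -[(i,false)]/(flipS (i,true)) WB_flip.
Qed.

Lemma WB_snd m (g : {perm ('I_m * bool)}) i b :
  g \in WB m -> (g (i, b)).2 = ((g (i, true)).2 == b).
Proof.
move=> Hg; case: b; first by case: (g (i,true)).2.
by rewrite -[(i,false)]/(flipS (i,true)) WB_flip //=; case: (g (i,true)).2.
Qed.

Lemma prf_inj m (g : {perm ('I_m * bool)}) : g \in WB m -> injective (prf g).
Proof.
move=> Hg u v; rewrite /prf => E.
have [s Hs] : exists s, g (v, s) = g (u, true).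
  exists ((g (v,true)).2 == (g (u,true)).2).
  rewrite [LHS]surjective_pairing [RHS]surjective_pairing.
  congr pair; first by rewrite WB_fst.
  rewrite WB_snd //.
  by case: (g (v,true)).2; case: (g (u,true)).2.
by move/perm_inj: Hs => [->].
Qed.

Lemma sgnnegM m (g h : {perm ('I_m * bool)}) :
  g \in WB m -> h \in WB m -> sgnneg (g * h)%g = sgnneg g (+) sgnneg h.
Proof.
move=> Hg Hh; rewrite !sgnneg_xor.
rewrite [X in _ = _ (+) X](reindex_inj (@prf_inj _ _ Hg)) /= -big_split /=.
apply: eq_bigr => u _.
rewrite /srcneg permM /prf.
case E: (g (u, true)) => [v s] /=.
rewrite WB_snd //.
by case: (h (v,true)).2; case: s E.
Qed.

Section GO.
Variables (n : nat) (G : {group {perm ('I_n * bool)}}) (n' : nat).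
Hypothesis HGW : G \subset WB n.
Hypothesis Hn' : (n' <= n)%N.
Hypothesis HO : exists i : 'I_n,
          [set j : 'I_n | (nat_of_ord j < n')%N] = [set prf g i | g in G].

Lemma inG_WB g : g \in G -> g \in WB n.
Proof. by move=> Hg; apply: (subsetP HGW). Qed.

Lemma inv_O g (j : 'I_n) b : g \in G -> (j < n')%N -> ((g (j, b)).1 < n')%N.
Proof.
move=> Hg Hj; case: HO => i Hi.
have : j \in [set j : 'I_n | (nat_of_ord j < n')%N] by rewrite inE.
rewrite Hi => /imsetP [h Hh Ej].
rewrite WB_fst ?inG_WB //.
have : prf (h * g)%g i \in [set j : 'I_n | (nat_of_ord j < n')%N].
  by rewrite Hi; apply/imsetP; exists (h * g)%g; rewrite ?groupM.
by rewrite inE /prf permM [h (i, true)]surjective_pairing WB_fst ?inG_WB // -/(prf h i) -Ej.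
Qed.

Lemma gO_funM g h : g \in G ->
  gO_fun n' (g * h)%g =1 gO_fun n' h \o gO_fun n' g.
Proof.
move=> Hg [x b] /=; rewrite /gO_fun /=.
case: ifP => Hx; last by rewrite /= Hx.
case: insubP => [i _ Ei | ]; last first.
  by move/negP; case; apply: leq_trans Hx _; apply: leq_trans Hn'.
have Hy := @inv_O g i b Hg ltac:(by rewrite Ei).
rewrite /= inordK; last by apply: leq_trans Hy _.
rewrite Hy /= permM.
case: insubP => [k _ Ek | ]; last by rewrite ltn_ord.
have -> : k = (g (i,b)).1 by apply: val_inj.
by rewrite -surjective_pairing.
Qed.

Lemma gO_fun1 : gO_fun n' (1%g : {perm ('I_n * bool)}) =1 id.
Proof.
move=> [x b]; rewrite /gO_fun /=; case: ifP => // Hx.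
case: insubP => // i _ Ei; rewrite perm1 /= Ei inord_val //.
Qed.

Lemma gO_E g : g \in G -> gO n' g =1 gO_fun n' g.
Proof.
move=> Hg x; rewrite /gO /perm_or1; case: injectiveP => [inj | ninj].
  by rewrite permE.
exfalso; apply: ninj.
apply: (can_inj (g := gO_fun n' (g^-1)%g)) => y.
by rewrite -[gO_fun n' _ (gO_fun n' _ _)]/((gO_fun n' (g^-1)%g \o gO_fun n' g) y)
  -gO_funM // mulgV gO_fun1.
Qed.

Lemma gOM g h : g \in G -> h \in G -> gO n' (g * h)%g = (gO n' g * gO n' h)%g.
Proof.
move=> Hg Hh; apply/permP => x.
by rewrite permM !gO_E ?groupM // gO_funM.
Qed.

Lemma gO1 : gO n' (1%g : {perm ('I_n * bool)}) = 1%g.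
Proof. by apply/permP => x; rewrite gO_E // gO_fun1 perm1. Qed.

Lemma gO_WB g : g \in G -> gO n' g \in WB n'.+1.
Proof.
move=> Hg; rewrite inE; apply/forallP => -[x b]; apply/eqP.
rewrite !gO_E // /gO_fun /flipS /=; case: ifP => // Hx.
case: insubP => // i _ Ei.
by rewrite -[(i, ~~ b)]/(flipS (i, b)) WB_flip ?inG_WB.
Qed.

Lemma gO_fix g b : g \in G -> gO n' g (ord_max, b) = (ord_max, b).
Proof. by move=> Hg; rewrite gO_E // /gO_fun /= ltnn. Qed.

Lemma gO_notmax g x : g \in G -> x.1 != ord_max -> (gO n' g x).1 != ord_max.
Proof.
move=> Hg; case: x => x b /= Hx.
have Hx' : (x < n')%N.
  by rewrite ltn_neqAle -ltnS ltn_ord andbT; apply: contra Hx => /eqP E; apply/eqP/val_inj.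
rewrite gO_E // /gO_fun /= Hx'.
case: insubP => // i _ Ei /=.
have Hy := @inv_O g i b Hg ltac:(by rewrite Ei).
apply/eqP => /(congr1 val); rewrite /= inordK ?(leq_trans Hy) // => E.
by move: Hy; rewrite E ltnn.
Qed.

Lemma cS_comm g : g \in G -> commute (cS (@ord_max n')) (gO n' g).
Proof.
move=> Hg; apply/permP => -[x b]; rewrite !permM /cS.
have [->|Hx] := eqVneq x ord_max.
  by case: b; [rewrite tpermL !gO_fix // tpermL | rewrite tpermR !gO_fix // tpermR].
rewrite tpermD; last 2 first.
- by apply: contra Hx => /eqP [->].
- by apply: contra Hx => /eqP [->].
have := @gO_notmax g (x, b) Hg Hx.
case: (gO n' g (x, b)) => y c /= Hy.
rewrite tpermD //; apply: contra Hy => /eqP [->] //.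
Qed.

Lemma PO_M g h : g \in G -> h \in G -> PO n' (g * h)%g = (PO n' g * PO n' h)%g.
Proof.
move=> Hg Hh; rewrite /PO gOM // sgnnegM ?gO_WB //.
have Hc := @cS_comm g Hg.
have cc : (cS (@ord_max n') * cS (@ord_max n'))%g = 1%g.
  by apply/permP => x; rewrite permM tpermK perm1.
case: (sgnneg (gO n' g)); case: (sgnneg (gO n' h)) => /=.
- by rewrite -mulgA (mulgA (gO n' g)) -Hc !mulgA cc mul1g.
- by rewrite mulgA.
- by rewrite !mulgA Hc.
- by [].
Qed.

End GO.

Theorem lemma6p1 (n : nat) (G : {group {perm ('I_n * bool)}})
  (HGD : G \subset WD n)
  (HH1 : H1_cond G) (Hrel : relmin_cond G) (Hmin : min_cond G)
  (n' : nat) (Hn' : (n' <= n)%N)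
  (HO : exists i : 'I_n,
          [set j : 'I_n | (nat_of_ord j < n')%N] = [set prf g i | g in G]) :
  group_set (PO n' @: G) /\ {in G &, {morph PO n' : x y / (x * y)%g}}.
Proof.
have HGW : G \subset WB n.
  by apply: (subset_trans HGD); apply/subsetP => g; rewrite inE => /andP [].
have HM : {in G &, {morph PO n' : x y / (x * y)%g}}.
  by move=> g h Hg Hh; exact: (@PO_M n G n' HGW Hn' HO g h Hg Hh).
split=> //.
apply/group_setP; split.
  apply/imsetP; exists 1%g => //.
  rewrite /PO (@gO1 n G n' HGW Hn' HO).
  have -> : sgnneg (1%g : {perm ('I_n'.+1 * bool)}) = false.
    by rewrite sgnneg_xor big1 // => u _; rewrite /srcneg perm1.
  by [].
move=> x y /imsetP [g Hg ->] /imsetP [h Hh ->].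
by rewrite -HM // imset_f ?groupM.
Qed.
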